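(* Let $k,r,h$ be positive integers with $r\mid(k+h)$. Let $m$ be the smallest integer such that $n=k+h+\frac{k+h}{r}\le 2^m-1$. Then there exists a maximally recoverable local $(k,r,h)$-code over the field $\mathbb{F}_{2^{hm}}$.
   Context: For positive integers $k,r,h$ with $r\mid(k+h)$, a local $(k,r,h)$-code over a finite field $\mathbb{F}$ is a linear systematic code of dimension $k$ and length $n=k+h+\frac{k+h}{r}$ consisting of $k$ data symbols, $h$ heavy parity symbols (each a fixed $\mathbb{F}$-linear combination of all data symbols), and, after partitioning the $k+h$ data and heavy parity symbols into $\frac{k+h}{r}$ groups of size $r$, one local parity per group equal to the sum (XOR) of the $r$ symbols of that group. A local group is such a group together with its local parity. The code is maximally recoverable if for every set $E$ of coordinates obtained by picking exactly one coordinate from each local group, puncturing the code in $E$ (deleting those coordinates) yields a maximum distance separable $[k+h,k]$ code (minimum distance $h+1$). *)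

(* Defs.v *)
From HB Require Import structures.
From mathcomp Require Import all_boot all_order all_algebra.
Set Implicit Arguments. Unset Strict Implicit. Unset Printing Implicit Defensive.
Import GRing.Theory.
Local Open Scope ring_scope.

(* Coordinates of a local (k,r,h)-code of length k + h + g, g = (k+h)/r:
   positions lshift g i (i : 'I_(k+h)) are the k data symbols (i < k)
   followed by the h heavy parities (k <= i < k+h);
   positions rshift (k+h) j (j : 'I_g) are the g local parities.
   grp : 'I_(k+h) -> 'I_g assigns each data/heavy symbol to its group. *)

Definition local_partition (N g r : nat) (grp : 'I_N -> 'I_g) : Prop :=
  forall j : 'I_g, #|[set i | grp i == j]| = r.

Definition local_incidence (F : fieldType) (N g : nat) (grp : 'I_N -> 'I_g)
  : 'M[F]_(N, g) := \matrix_(i, j) (grp i == j)%:R.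

(* generator matrix of the systematic code: data x ↦
   (x, x *m H, local parities of (x, x *m H)); column j of H gives the
   coefficients of heavy parity j *)
Definition lrc_gen (F : fieldType) (k h g : nat) (grp : 'I_(k + h) -> 'I_g)
  (H : 'M[F]_(k, h)) : 'M[F]_(k, k + h + g) :=
  let A := row_mx (1%:M : 'M[F]_k) H in row_mx A (A *m local_incidence F grp).

Definition local_group (k h g : nat) (grp : 'I_(k + h) -> 'I_g) (j : 'I_g)
  : {set 'I_(k + h + g)} :=
  [set lshift g i | i in [set i | grp i == j]] :|: [set rshift (k + h) j].

(* Maximal recoverability: for every E containing exactly one coordinate of
   each local group, the code punctured in E is an MDS [k+h, k] code, i.e.
   every nonzero data vector yields a punctured codeword of weight >= h+1
   (this gives both dimension k and minimum distance h+1). *)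
Definition maximally_recoverable (F : fieldType) (k h g : nat)
  (grp : 'I_(k + h) -> 'I_g) (H : 'M[F]_(k, h)) : Prop :=
  forall E : {set 'I_(k + h + g)},
    (forall j : 'I_g, #|E :&: local_group grp j| = 1%N) ->
    forall x : 'rV[F]_k, x != 0 ->
      (h + 1 <= #|[set i | (i \notin E) && ((x *m lrc_gen grp H) ord0 i != 0%R)]|)%N.

(* Main.v *)
Require Import Defs.
From HB Require Import structures.
From mathcomp Require Import all_boot all_order all_algebra.
From mathcomp Require Import all_field all_fingroup all_solvable.
From mathcomp Require Import zify.
Set Implicit Arguments. Unset Strict Implicit. Unset Printing Implicit Defensive.
Import GRing.Theory.
Local Open Scope ring_scope.

Section Char2.
Variable F : fieldType.
Hypothesis two0 : (2%:R : F) = 0.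

Lemma addxx (x : F) : x + x = 0.
Proof. by rewrite -mulr2n -mulr_natr two0 mulr0. Qed.

Lemma natr_odd n : (n%:R : F) = (odd n)%:R.
Proof.
elim: n => // n IH; rewrite -[n.+1]addn1 natrD IH oddD /=.
by case: (odd n) => /=; rewrite ?addxx ?add0r.
Qed.

Lemma frobD n (x y : F) : (x + y) ^+ (2 ^ n) = x ^+ (2 ^ n) + y ^+ (2 ^ n).
Proof.
elim: n => [|n IH]; first by rewrite !expr1.
rewrite expnS mulnC !exprM IH sqrrD -mulr_natr two0 mulr0 addr0.
by [].
Qed.

Lemma frob_sum n (I : Type) (r : seq I) (P : pred I) (f : I -> F) :
  (\sum_(i <- r | P i) f i) ^+ (2 ^ n) = \sum_(i <- r | P i) f i ^+ (2 ^ n).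
Proof.
apply: (big_morph (fun x => x ^+ (2 ^ n))).
  by move=> x y; rewrite frobD.
by rewrite expr0n expn_eq0.
Qed.

End Char2.

Lemma rowker_unit (F : fieldType) s (M : 'M[F]_s) :
  (forall c : 'rV_s, c *m M = 0 -> c = 0) -> M \in unitmx.
Proof.
move=> H; rewrite -row_free_unit -kermx_eq0; apply/eqP/row_matrixP => i.
rewrite row0; apply: H; apply/sub_kermxP; exact: row_sub.
Qed.

Lemma moore_unit (F : fieldType) (two0 : 2%:R = 0 :> F) s (mu : 'I_s -> F) :
  (forall T : {set 'I_s}, T != set0 -> \sum_(a in T) mu a != 0) ->
  (\matrix_(q < s, a < s) mu a ^+ (2 ^ q)) \in unitmx.
Proof.
move=> Hind; apply: rowker_unit => c Hc.
pose L : {poly F} := \sum_(q < s) c 0 q *: 'X^(2 ^ q).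
have hL x : L.[x] = \sum_(q < s) c 0 q * x ^+ (2 ^ q).
  by rewrite /L horner_sum; apply: eq_bigr => q _; rewrite hornerZ hornerXn.
have Ladd x y : L.[x + y] = L.[x] + L.[y].
  by rewrite !hL -big_split; apply: eq_bigr => q _; rewrite frobD // mulrDr.
have L0 : L.[0] = 0.
  by rewrite hL big1 // => q _; rewrite expr0n expn_eq0 mulr0.
have Lmu a : L.[mu a] = 0.
  rewrite hL; have := congr1 (fun M : 'M[F]_(1, s) => M 0 a) Hc; rewrite !mxE => H0.
  by rewrite -[X in _ = X]H0; apply: eq_bigr => q _; rewrite mxE.
have Lsum (T : {set 'I_s}) : L.[\sum_(a in T) mu a] = 0.
  by rewrite (big_morph (fun x => L.[x]) Ladd L0) big1.
have [LL0|Ln0] := eqVneq L 0.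
  apply/rowP => q; rewrite mxE.
  have := congr1 (fun p : {poly F} => p`_(2 ^ q)) LL0.
  rewrite coef0 /L coef_sum (bigD1 q) //= coefZ coefXn eqxx mulr1 big1 ?addr0 //.
  move=> q' nq; rewrite coefZ coefXn eqn_exp2l //.
  by rewrite (_ : (q == q' :> nat) = false) ?mulr0 //; apply/negbTE; rewrite eq_sym.
exfalso.
have inj : injective (fun T : {set 'I_s} => \sum_(a in T) mu a).
  move=> T T' /= eqT.
  pose D := [set a | (a \in T) != (a \in T')].
  have hD : \sum_(a in D) mu a = \sum_(a in T) mu a + \sum_(a in T') mu a.
    rewrite [LHS]big_mkcond [X in X + _]big_mkcond [X in _ + X]big_mkcond -big_split.
    apply: eq_bigr => a _; rewrite inE.
    by case: (a \in T); case: (a \in T') => /=; rewrite ?addxx ?addr0 ?add0r.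
  have : D == set0.
    apply: contraT => /Hind; by rewrite hD eqT addxx // eqxx.
  move/eqP => D0; apply/setP => a.
  have : a \notin D by rewrite D0 inE.
  by rewrite inE negbK => /eqP.
pose rs := map (fun T : {set 'I_s} => \sum_(a in T) mu a) (enum (powerset [set: 'I_s])).
have := max_poly_roots (rs := rs) Ln0.
rewrite map_inj_uniq // enum_uniq size_map -cardE card_powerset cardsT card_ord.
have -> : all (root L) rs.
  by apply/allP => y /mapP [T _ ->]; rewrite /root Lsum.
move=> /(_ isT isT); apply/negP; rewrite -leqNgt.
have s_gt0 : (0 < s)%N.
  rewrite lt0n; apply/negP => /eqP s0; move: Ln0; rewrite /L big1 ?eqxx // => q.
  by have := ltn_ord q; rewrite {2}s0.
apply: (leq_trans (size_sum _ _ _)); apply/bigmax_leqP => q _.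
apply: (leq_trans (size_scale_leq _ _)); rewrite size_polyXn.
have e : (2 ^ s = 2 * 2 ^ s.-1)%N by rewrite -expnS prednK.
rewrite e.
have : (2 ^ q <= 2 ^ s.-1)%N by rewrite leq_exp2l // -ltnS prednK.
have : (1 <= 2 ^ s.-1)%N by rewrite expn_gt0.
lia.
Qed.

Lemma vdm_unit (F : fieldType) t (al : 'I_t -> F) :
  injective al -> (forall s, al s != 0) ->
  (\matrix_(l < t, s < t) al s ^+ l.+1) \in unitmx.
Proof.
move=> ainj anz; apply: rowker_unit => c Hc.
pose P : {poly F} := \sum_(l < t) c 0 l *: 'X^l.
have hP x : P.[x] = \sum_(l < t) c 0 l * x ^+ l.
  by rewrite /P horner_sum; apply: eq_bigr => q _; rewrite hornerZ hornerXn.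
have Proot s : P.[al s] = 0.
  have := congr1 (fun M : 'M[F]_(1,t) => M 0 s) Hc; rewrite !mxE => H0.
  apply: (mulIf (anz s)); rewrite mul0r hP mulr_suml -[X in _ = X]H0.
  by apply: eq_bigr => l _; rewrite mxE exprSr mulrA.
have [P0|Pn0] := eqVneq P 0.
  apply/rowP => q; rewrite mxE.
  have := congr1 (fun p : {poly F} => p`_q) P0.
  rewrite coef0 /P coef_sum (bigD1 q) //= coefZ coefXn eqxx mulr1 big1 ?addr0 //.
  move=> q' nq; rewrite coefZ coefXn.
  by rewrite (_ : (q == q' :> nat) = false) ?mulr0 //; apply/negbTE; rewrite eq_sym.
exfalso; have := max_poly_roots (rs := map al (enum 'I_t)) Pn0.
rewrite size_map -cardE card_ord map_inj_uniq // enum_uniq.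
have -> : all (root P) (map al (enum 'I_t)).
  by apply/allP => y /mapP [s _ ->]; rewrite /root Proot.
move=> /(_ isT isT); apply/negP; rewrite -leqNgt.
apply: (leq_trans (size_sum _ _ _)); apply/bigmax_leqP => q _.
by apply: (leq_trans (size_scale_leq _ _)); rewrite size_polyXn.
Qed.

Lemma cfix_pow (F : fieldType) m (x : F) : x ^+ (2 ^ m) = x ->
  forall a, x ^+ (2 ^ (a * m)) = x.
Proof.
move=> hx; elim=> [|a IH]; first by rewrite mul0n expr1.
by rewrite mulSn expnD exprM hx IH.
Qed.

Lemma kindep (F : fieldType) (two0 : 2%:R = 0 :> F) h m (ga : F) :
  (0 < m)%N -> (2 ^ (h * m) - 1).-primitive_root ga ->
  forall c : 'I_h -> F, (forall j, c j ^+ (2 ^ m) = c j) ->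
  \sum_(j < h) c j * ga ^+ j = 0 -> forall j, c j = 0.
Proof.
move=> m_gt0 prim c cK Hsum.
pose P : {poly F} := \sum_(l < h) c l *: 'X^l.
have hP x : P.[x] = \sum_(l < h) c l * x ^+ l.
  by rewrite /P horner_sum; apply: eq_bigr => q _; rewrite hornerZ hornerXn.
have Proot (a : 'I_h) : P.[ga ^+ (2 ^ (a * m))] = 0.
  rewrite hP; transitivity ((\sum_(j < h) c j * ga ^+ j) ^+ (2 ^ (a * m))).
    rewrite frob_sum //; apply: eq_bigr => j _.
    by rewrite exprMn (cfix_pow (cK j)) exprAC.
  by rewrite Hsum expr0n expn_eq0.
have [P0|Pn0] := eqVneq P 0.
  move=> q; have := congr1 (fun p : {poly F} => p`_q) P0.
  rewrite coef0 /P coef_sum (bigD1 q) //= coefZ coefXn eqxx mulr1 big1 ?addr0 //.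
  move=> q' nq; rewrite coefZ coefXn.
  by rewrite (_ : (q == q' :> nat) = false) ?mulr0 //; apply/negbTE; rewrite eq_sym.
exfalso.
have inj : injective (fun a : 'I_h => ga ^+ (2 ^ (a * m))).
  move=> a b /eqP; rewrite (eq_prim_root_expr prim) => /eqP hab.
  apply: val_inj => /=.
  have [h1|h2] := leqP h 1%N.
    by have := ltn_ord a; have := ltn_ord b; lia.
  have X2 : (2 <= 2 ^ ((h - 1) * m))%N.
    by rewrite -{1}(expn1 2) leq_exp2l // muln_gt0 m_gt0 andbT subn_gt0.
  have eh : (2 ^ (h * m) = 2 ^ m * 2 ^ ((h - 1) * m))%N.
    by rewrite -expnD -mulSn subn1 prednK // ltnW.
  have m2 : (2 <= 2 ^ m)%N by rewrite -{1}(expn1 2) leq_exp2l.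
  have bnd (d : 'I_h) : (2 ^ (d * m) < 2 ^ (h * m) - 1)%N.
    have : (2 ^ (d * m) <= 2 ^ ((h - 1) * m))%N.
      by rewrite leq_exp2l // leq_mul2r; have := ltn_ord d; lia.
    rewrite eh; move: X2 m2; set X := (2 ^ ((h-1) * m))%N; set Y := (2 ^ m)%N.
    move=> X2 m2 dX.
    have : (2 * X <= Y * X)%N by rewrite leq_mul2r m2 orbT.
    lia.
  move: hab; rewrite !modn_small ?bnd // => /eqP; rewrite eqn_exp2l //.
  by rewrite eqn_pmul2r // => /eqP.
have := max_poly_roots (rs := map (fun a : 'I_h => ga ^+ (2 ^ (a * m))) (enum 'I_h)) Pn0.
rewrite size_map -cardE card_ord map_inj_uniq // enum_uniq.
have -> : all (root P) (map (fun a : 'I_h => ga ^+ (2 ^ (a * m))) (enum 'I_h)).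
  by apply/allP => y /mapP [s _ ->]; rewrite /root Proot.
move=> /(_ isT isT); apply/negP; rewrite -leqNgt.
apply: (leq_trans (size_sum _ _ _)); apply/bigmax_leqP => q _.
by apply: (leq_trans (size_scale_leq _ _)); rewrite size_polyXn.
Qed.

Lemma two0_of (F : finFieldType) n : (0 < n)%N -> #|F| = (2 ^ n)%N -> (2%:R : F) = 0.
Proof. by move=> n0 cF; apply: pcharf0; apply: (card_finPcharP cF). Qed.

Lemma lambda_exists (F : finFieldType) h m N : (0 < h)%N -> (0 < m)%N ->
  #|F| = (2 ^ (h * m))%N -> (N <= 2 ^ m - 1)%N ->
  exists lam : 'I_N -> F, forall S : {set 'I_N},
    (0 < #|S| <= 2 * h)%N -> \sum_(i in S) lam i != 0.
Proof.
move=> h0 m0 cF NB.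
have hm0 : (0 < h * m)%N by rewrite muln_gt0 h0.
have two0 := two0_of hm0 cF.
set Nt := (2 ^ (h * m) - 1)%N.
have Nt0 : (0 < Nt)%N.
  rewrite /Nt subn_gt0 -{1}(expn0 2) ltn_exp2l //.
have [ga prim] : exists ga : F, Nt.-primitive_root ga.
  have := @has_prim_root F Nt (enum (predC1 0)) Nt0.
  have -> : all Nt.-unity_root (enum (predC1 (0 : F))).
    apply/allP => x; rewrite mem_enum inE => xn0; rewrite unity_rootE.
    have := expf_card x; rewrite cF -(prednK (expn_gt0 2 (h * m))) exprS.
    rewrite -[X in _ = X](mulr1 x) => H; have := mulfI xn0 H; rewrite /Nt subn1 => ->; exact: eqxx.
  rewrite enum_uniq -cardE cardC1 cF /Nt subn1 leqnn.
  by move=> /(_ isT isT isT) /hasP [ga _ pr]; exists ga.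
set d := (2 ^ m - 1)%N.
have dNt : (d %| Nt)%N.
  have e2m : (2 ^ m = d + 1)%N by rewrite /d subnK // expn_gt0.
  rewrite /Nt -eqn_mod_dvd ?expn_gt0 //.
  rewrite mulnC expnM -modnXm e2m modnDl modnXm exp1n.
  by [].
set c := (Nt %/ d)%N.
have eNt : Nt = (c * d)%N by rewrite /c divnK.
have c0 : (0 < c)%N by move: Nt0; rewrite eNt muln_gt0 => /andP[].
have ga1 : ga ^+ (c * d) = 1 by rewrite -eNt prim_expr_order.
have ga0 : ga != 0.
  apply/eqP => g0; move: ga1; rewrite g0 expr0n -eNt (negbTE (lt0n_neq0 Nt0)).
  by move/eqP; rewrite eq_sym oner_eq0.
pose al (i : 'I_N) := ga ^+ (c * i).
have alK i : al i ^+ (2 ^ m) = al i.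
  rewrite /al -exprM (_ : (2 ^ m) = d + 1)%N; last by rewrite /d subnK // expn_gt0.
  by rewrite mulnDr muln1 exprD mulnAC exprM ga1 expr1n mul1r.
have alinj : injective al.
  move=> i i' /eqP; rewrite /al (eq_prim_root_expr prim) eNt.
  have hi (j : 'I_N) : (c * j < c * d)%N by rewrite ltn_pmul2l //; apply: leq_trans (ltn_ord j) NB.
  rewrite !modn_small ?hi // eqn_pmul2l // => /eqP; exact: val_inj.
have al0 i : al i != 0 by rewrite expf_neq0.
pose lam (i : 'I_N) := \sum_(j < h) ga ^+ j * al i ^+ (2 * j).+1.
exists lam => S /andP [S0 S2h].
apply/negP => /eqP Hs.
pose p l := \sum_(i in S) al i ^+ l.
have pK l : p l ^+ (2 ^ m) = p l.
  rewrite /p frob_sum //; apply: eq_bigr => i _; by rewrite exprAC alK.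
have podd (j : 'I_h) : p (2 * j).+1 = 0.
  apply: (@kindep F two0 h m ga m0 _ (fun j : 'I_h => p (2 * j).+1)) => //.
  rewrite -[RHS]Hs /lam exchange_big /=; apply: eq_bigr => j' _.
  by rewrite mulrC /p mulr_sumr.
have pall l : (0 < l <= 2 * h)%N -> p l = 0.
  elim/ltn_ind: l => l IH /andP [l0 l2h].
  have := odd_double_half l; rewrite -muln2; move: (l./2) => x.
  case: (odd l) => /= el.
    have jh : (x < h)%N by lia.
    have := podd (Ordinal jh); rewrite /=.
    by have -> : ((2 * x).+1 = l)%N by lia.
  have x0 : (0 < x < l)%N by lia.
  rewrite -el add0n /p.
  transitivity ((\sum_(i in S) al i ^+ x) ^+ (2 ^ 1)).
    by rewrite frob_sum //; apply: eq_bigr => i _; rewrite expn1 -[RHS]exprM.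
  by rewrite [\sum_(i in S) _]IH ?expr0n //; lia.
pose bl (s : 'I_#|S|) := al (enum_val s).
have blinj : injective bl by move=> s s' /alinj /enum_val_inj.
have V := vdm_unit blinj (fun s => al0 _).
pose one := const_mx 1 : 'cV[F]_#|S|.
have V1 : (\matrix_(l < #|S|, s < #|S|) bl s ^+ l.+1) *m one = 0.
  apply/colP => l; rewrite !mxE.
  transitivity (p l.+1); last by apply: pall; have := ltn_ord l; lia.
  rewrite /p (big_enum_val (fun i => al i ^+ l.+1)) /=.
  by apply: eq_bigr => s _; rewrite !mxE mulr1.
have := mulKmx V one; rewrite V1 mulmx0 => /(congr1 (fun M : 'cV[F]_#|S| => M (Ordinal S0) 0)).
by rewrite !mxE => /eqP; rewrite eq_sym oner_eq0.
Qed.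

Lemma lr_neq N g (i : 'I_N) (j : 'I_g) : lshift g i != rshift N j.
Proof. by apply/eqP => /(congr1 val) /=; have := ltn_ord i; lia. Qed.

Section LG.
Variables (k h g : nat) (grp : 'I_(k + h) -> 'I_g).

Lemma mem_lgl i j : (lshift g i \in local_group grp j) = (grp i == j).
Proof.
rewrite /local_group in_setU in_set1 (negbTE (lr_neq _ _)) orbF.
by rewrite mem_imset ?inE //; exact: lshift_inj.
Qed.

Lemma mem_lgr j' j : (rshift (k + h) j' \in local_group grp j) = (j' == j).
Proof.
rewrite /local_group in_setU in_set1.
case: imsetP => [[i _ /eqP]|_]; first by rewrite eq_sym (negbTE (lr_neq _ _)).
by apply/eqP/eqP => [/rshift_inj|->].
Qed.

Variable E : {set 'I_(k + h + g)}.
Hypothesis HE : forall j : 'I_g, #|E :&: local_group grp j| = 1%N.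

Lemma uniqE j a b : a \in E -> b \in E -> a \in local_group grp j ->
  b \in local_group grp j -> a = b.
Proof.
move=> aE bE aL bL; have /eqP/cards1P [y Hy] := HE j.
have : a \in E :&: local_group grp j by rewrite inE aE aL.
have : b \in E :&: local_group grp j by rewrite inE bE bL.
by rewrite Hy !inE => /eqP -> /eqP ->.
Qed.

Lemma exE j : exists a, (a \in E) && (a \in local_group grp j).
Proof.
have /eqP/cards1P [y Hy] := HE j; exists y.
by rewrite -in_setI Hy set11.
Qed.

End LG.

Section MR.
Variables (F : fieldType) (k h g : nat) (grp : 'I_(k + h) -> 'I_g) (lam : 'I_(k + h) -> F).
Hypothesis two0 : (2%:R : F) = 0.
Variable E : {set 'I_(k + h + g)}.
Hypothesis HE : forall j : 'I_g, #|E :&: local_group grp j| = 1%N.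

Definition Eg j := [set u | (grp u == j) && (lshift g u \in E)].
Definition eps j := \sum_(u in Eg j) lam u.
Definition mu (a : 'I_(k + h + g)) :=
  match split a with inl i => lam i + eps (grp i) | inr j => eps j end.
Definition Dset (a : 'I_(k + h + g)) : {set 'I_(k + h)} :=
  match split a with inl i => i |: Eg (grp i) | inr j => Eg j end.

Lemma muL i : mu (lshift g i) = lam i + eps (grp i).
Proof. by rewrite /mu (unsplitK (inl _ i)). Qed.
Lemma muR j : mu (rshift (k + h) j) = eps j.
Proof. by rewrite /mu (unsplitK (inr _ j)). Qed.
Lemma DL i : Dset (lshift g i) = i |: Eg (grp i).
Proof. by rewrite /Dset (unsplitK (inl _ i)). Qed.
Lemma DR j : Dset (rshift (k + h) j) = Eg j.
Proof. by rewrite /Dset (unsplitK (inr _ j)). Qed.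

Lemma Eg_le1 j : (#|Eg j| <= 1)%N.
Proof.
apply/card_le1_eqP => u v; rewrite !inE => /andP[/eqP gu uE] /andP[/eqP gv vE].
apply: lshift_inj; apply: (uniqE HE (j := j)) => //; by rewrite mem_lgl ?gu ?gv.
Qed.

Lemma epsE u : lshift g u \in E -> eps (grp u) = lam u.
Proof.
move=> uE; rewrite /eps; have -> : Eg (grp u) = [set u].
  apply/eqP; rewrite eq_sym eqEcard sub1set inE eqxx uE /= cards1 Eg_le1 //.
by rewrite big_set1.
Qed.

Lemma eps0 j : rshift (k + h) j \in E -> eps j = 0.
Proof.
move=> jE; rewrite /eps big1 // => u; rewrite inE => /andP [/eqP gu uE].
have := uniqE HE uE jE (j := j); rewrite mem_lgl mem_lgr gu !eqxx => /(_ isT isT) /eqP.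
by rewrite (negbTE (lr_neq _ _)).
Qed.

Lemma muE a : a \in E -> mu a = 0.
Proof.
case: (split_ordP a) => i -> aE; first by rewrite muL epsE // addxx.
by rewrite muR eps0.
Qed.

Lemma mu_sum a : a \notin E -> mu a = \sum_(u in Dset a) lam u.
Proof.
case: (split_ordP a) => i -> aE; last by rewrite muR DR.
by rewrite muL DL big_setU1 // inE (negbTE aE) andbF.
Qed.

Lemma card_D a : (#|Dset a| <= 2)%N.
Proof.
case: (split_ordP a) => i ->; last by rewrite DR (leq_trans (Eg_le1 _)).
rewrite DL cardsU1; have := Eg_le1 (grp i); case: (i \notin Eg (grp i)) => /= H1; first by rewrite add1n ltnS.
by rewrite add0n (leq_trans H1).
Qed.

Variable H : 'M[F]_(k, h).

Lemma wL (x : 'rV[F]_k) i :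
  (x *m lrc_gen grp H) ord0 (lshift g i) = (row_mx x (x *m H)) ord0 i.
Proof. by rewrite /lrc_gen mul_mx_row row_mxEl mul_mx_row mulmx1. Qed.

Lemma wR (x : 'rV[F]_k) j :
  (x *m lrc_gen grp H) ord0 (rshift (k + h) j) =
  \sum_(i | grp i == j) (row_mx x (x *m H)) ord0 i.
Proof.
rewrite /lrc_gen mul_mx_row row_mxEr mulmxA mul_mx_row mulmx1 mxE.
rewrite [RHS]big_mkcond; apply: eq_bigr => i _; rewrite /local_incidence !mxE.
by case: (grp i == j); rewrite ?mulr1 ?mulr0.
Qed.

Hypothesis Hchk : forall (x : 'rV[F]_k) (q : 'I_h),
  \sum_(i < k + h) (row_mx x (x *m H)) ord0 i * lam i ^+ (2 ^ q) = 0.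

Lemma chk (x : 'rV[F]_k) (q : 'I_h) :
  \sum_(a < k + h + g) (x *m lrc_gen grp H) ord0 a * mu a ^+ (2 ^ q) = 0.
Proof.
rewrite big_split_ord /=.
under eq_bigr do rewrite wL muL frobD // mulrDr.
under [X in _ + X]eq_bigr do rewrite wR muR mulr_suml.
rewrite big_split /= Hchk add0r.
rewrite [X in X + _](partition_big grp xpredT) //=.
rewrite -big_split /= big1 // => j _.
rewrite -big_split /= big1 // => i /eqP <-; exact: addxx.
Qed.

Hypothesis Hlam : forall S : {set 'I_(k + h)},
  (0 < #|S| <= 2 * h)%N -> \sum_(i in S) lam i != 0.

Lemma sum_bool_card (T : finType) (A : {set T}) : (\sum_u (u \in A) = #|A|)%N.
Proof. by rewrite -sum1_card [RHS]big_mkcond. Qed.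

Lemma CL (T : {set 'I_(k + h + g)}) : (forall a, a \in T -> a \notin E) ->
  T != set0 -> (#|T| <= h)%N -> \sum_(a in T) mu a != 0.
Proof.
move=> TE T0 Th.
pose cnt u := (\sum_(a in T) (u \in Dset a))%N.
pose S := [set u | odd (cnt u)].
have sumE : \sum_(a in T) mu a = \sum_(u in S) lam u.
  rewrite (eq_bigr (fun a => \sum_(u in Dset a) lam u)); last first.
    by move=> a /TE; exact: mu_sum.
  under eq_bigr do rewrite big_mkcond /=.
  rewrite exchange_big /= [RHS]big_mkcond /=; apply: eq_bigr => u _.
  rewrite inE; transitivity ((cnt u)%:R * lam u).
    rewrite /cnt natr_sum mulr_suml; apply: eq_bigr => a _.
    by case: (u \in Dset a); rewrite ?mul1r ?mul0r.
  by rewrite (natr_odd two0); case: odd; rewrite ?mul1r ?mul0r.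
have Scard : (#|S| <= 2 * h)%N.
  have h1 : (#|S| <= \sum_u cnt u)%N.
    rewrite -sum1_card [X in (_ <= X)%N](bigID (mem S)) /=.
    apply: leq_trans (leq_addr _ _); apply: leq_sum => u; rewrite inE.
    by case: (cnt u).
  have h2 : (\sum_u cnt u <= 2 * #|T|)%N.
    rewrite /cnt exchange_big /=.
    under eq_bigr do rewrite sum_bool_card.
    rewrite -sum1_card big_distrr /=; apply: leq_sum => a _; rewrite muln1; exact: card_D.
  lia.
have Sne : S != set0.
  suff [u cu] : exists u, cnt u = 1%N by apply/set0Pn; exists u; rewrite inE cu.
  case: (boolP [exists i, lshift g i \in T]) => [/existsP [i iT] | noL].
    exists i; rewrite /cnt (bigD1 (lshift g i)) //= DL setU11 big1 // => a /andP [aT ai].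
    case: (split_ordP a) aT ai => [i' -> aT ai | j -> aT _].
      rewrite DL !inE (negbTE (TE _ iT)) andbF orbF.
      by case: (i =P i') ai => [-> | _ _]; [rewrite eqxx | ].
    by rewrite DR inE (negbTE (TE _ iT)) andbF.
  have [a aT] := set0Pn _ T0.
  case: (split_ordP a) aT => [i -> iT | j -> jT].
    by move/existsP: noL; case; exists i.
  have [y /andP [yE yL]] := exE HE j.
  case: (split_ordP y) yE yL => [u -> uE uL | j' -> j'E j'L].
    rewrite mem_lgl in uL; exists u; rewrite /cnt (bigD1 (rshift (k + h) j)) //= DR.
    rewrite inE uL uE big1 // => b /andP [bT bj].
    case: (split_ordP b) bT bj => [i -> iT _ | j'' -> j''T jj].
      by move/existsP: noL; case; exists i.
    rewrite DR inE; case: (grp u =P j'') => [gj|]; last by [].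
    by move: jj; rewrite -gj (eqP uL) eqxx.
  rewrite mem_lgr in j'L; rewrite (eqP j'L) in j'E.
  by have := TE _ jT; rewrite j'E.
rewrite sumE; apply: Hlam; rewrite Scard andbT lt0n cards_eq0 //.
Qed.

Lemma mr_main (x : 'rV[F]_k) : x != 0 ->
  (h + 1 <= #|[set i | (i \notin E) && ((x *m lrc_gen grp H) ord0 i != 0%R)]|)%N.
Proof.
move=> xn0; set w := x *m lrc_gen grp H; set W := [set i | _].
rewrite leqNgt addn1 ltnS; apply/negP => Wh.
have W0 : W = set0.
  apply/eqP; apply: contraT => Wn0.
  have s0 : (0 < #|W|)%N by rewrite lt0n cards_eq0.
  pose mu' (t : 'I_#|W|) := mu (enum_val t).
  have indep : forall T : {set 'I_#|W|}, T != set0 -> \sum_(t in T) mu' t != 0.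
    move=> T T0; rewrite /mu' -(big_imset _ (h := enum_val)) /=; last first.
      by move=> t t' _ _; exact: enum_val_inj.
    apply: CL.
    - move=> a /imsetP [t _ ->]; have := enum_valP t; rewrite inE.
      by case/andP.
    - by rewrite imset_eq0.
    - rewrite card_imset; last exact: enum_val_inj.
      by apply: leq_trans (max_card _) _; rewrite card_ord.
  have Mu := moore_unit two0 indep.
  pose d := \col_(t < #|W|) w ord0 (enum_val t).
  have Md : (\matrix_(q < #|W|, t < #|W|) mu' t ^+ (2 ^ q)) *m d = 0.
    apply/colP => q; rewrite !mxE.
    have qh : (q < h)%N by have := ltn_ord q; lia.
    rewrite -[RHS](chk x (Ordinal qh)) /=.
    transitivity (\sum_(a in W) w ord0 a * mu a ^+ (2 ^ q)).
      rewrite (big_enum_val (fun a => w ord0 a * mu a ^+ (2 ^ q))) /=.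
      by apply: eq_bigr => t _; rewrite !mxE mulrC.
    rewrite [RHS](bigID (mem W)) /= [X in _ = _ + X]big1 ?addr0 //.
    move=> a; rewrite inE negb_and => /orP [| /negPn /eqP ->]; last by rewrite mul0r.
    rewrite negbK => aE.
    by rewrite muE // expr0n expn_eq0 mulr0.
  have := mulKmx Mu d; rewrite Md mulmx0 => d0.
  have := enum_valP (Ordinal s0); rewrite inE => /andP [_].
  have := congr1 (fun M : 'cV[F]_#|W| => M (Ordinal s0) ord0) d0; rewrite /d [X in _ = X]mxE [X in X = _]mxE.
  by move=> <-; rewrite eqxx.
have wz a : a \notin E -> w ord0 a = 0.
  move=> aE; have : a \notin W by rewrite W0 inE.
  by rewrite inE aE /= negbK => /eqP.
have c0 : forall u, (row_mx x (x *m H)) ord0 u = 0.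
  move=> u; case: (boolP (lshift g u \in E)) => uE; last by rewrite -wL wz.
  have rE : rshift (k + h) (grp u) \notin E.
    apply/negP => rE; have := uniqE HE uE rE (j := grp u).
    rewrite mem_lgl mem_lgr !eqxx => /(_ isT isT) /eqP; by rewrite (negbTE (lr_neq _ _)).
  have := wz _ rE; rewrite wR (bigD1 u) //= big1 ?addr0 //.
  move=> i /andP [gi iu]; rewrite -wL wz //; apply/negP => iE.
  have := uniqE HE uE iE (j := grp u); rewrite !mem_lgl eqxx gi => /(_ isT isT).
  by move/lshift_inj => ui; rewrite ui eqxx in iu.
apply/negP: xn0; rewrite negbK; apply/eqP/rowP => i.
by have := c0 (lshift h i); rewrite row_mxEl mxE => ->.
Qed.

End MR.

Lemma H_exists (F : fieldType) (two0 : (2%:R : F) = 0) k h (lam : 'I_(k + h) -> F) :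
  (forall S : {set 'I_(k + h)}, (0 < #|S| <= 2 * h)%N -> \sum_(i in S) lam i != 0) ->
  exists H : 'M[F]_(k, h), forall (x : 'rV[F]_k) (q : 'I_h),
    \sum_(i < k + h) (row_mx x (x *m H)) ord0 i * lam i ^+ (2 ^ q) = 0.
Proof.
move=> Hlam.
pose Mo := \matrix_(i < k + h, q < h) lam i ^+ (2 ^ q).
pose mu0 (a : 'I_h) := lam (rshift k a).
have indep : forall T : {set 'I_h}, T != set0 -> \sum_(a in T) mu0 a != 0.
  move=> T T0; rewrite /mu0 -(big_imset _ (h := @rshift k h)) /=; last first.
    by move=> ? ? _ _; exact: rshift_inj.
  apply: Hlam; rewrite card_imset; last exact: rshift_inj.
  rewrite lt0n cards_eq0 T0 /=; apply: leq_trans (max_card _) _; rewrite card_ord; lia.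
have Bu : dsubmx Mo \in unitmx.
  have -> : dsubmx Mo = (\matrix_(q < h, a < h) mu0 a ^+ (2 ^ q))^T.
    by apply/matrixP => a q; rewrite !mxE.
  by rewrite unitmx_tr moore_unit.
pose H0 := - (usubmx Mo *m invmx (dsubmx Mo)).
exists H0 => x q.
have : (row_mx x (x *m H0)) *m Mo = 0.
  rewrite -[X in _ *m X]vsubmxK mul_row_col /H0 mulmxN mulNmx mulmxA mulmxKV //.
  by rewrite subrr.
move/(congr1 (fun M : 'rV[F]_h => M ord0 q)); rewrite [X in _ = X]mxE [X in X = _]mxE => e; rewrite -[in RHS]e.
by apply: eq_bigr => i _; rewrite [Mo _ _]mxE.
Qed.

Lemma grp_lt N r (i : 'I_N) : (0 < r)%N -> (r %| N)%N -> (i %/ r < N %/ r)%N.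
Proof. by move=> r0 rN; rewrite ltn_divLR // divnK. Qed.

Lemma f_lt N r (j : 'I_(N %/ r)) (v : 'I_r) : (j * r + v < N)%N.
Proof.
have := ltn_ord j; have := ltn_ord v; have := leq_trunc_div N r.
move=> h1 h2 h3; have : (j.+1 * r <= N %/ r * r)%N by rewrite leq_mul2r h3 orbT.
rewrite mulSn; lia.
Qed.

Lemma grp_exists N r : (0 < r)%N -> (r %| N)%N ->
  exists grp : 'I_N -> 'I_(N %/ r), local_partition r grp.
Proof.
move=> r0 rN.
exists (fun i => Ordinal (grp_lt i r0 rN)) => j.
pose f (v : 'I_r) : 'I_N := Ordinal (f_lt j v).
have finj : injective f.
  by move=> v v' /(congr1 val) /= /addnI /val_inj.
have -> : [set i : 'I_N | Ordinal (grp_lt i r0 rN) == j] = f @: [set: 'I_r].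
  apply/setP => i; rewrite inE; apply/eqP/imsetP.
    move=> /(congr1 val) /= gi; exists (Ordinal (ltn_pmod i r0)); first by rewrite in_setT.
    by apply: val_inj => /=; rewrite -gi -divn_eq.
  move=> [v _ ->]; apply: val_inj => /=.
  by rewrite divnMDl // (divn_small (ltn_ord v)) addn0.
by rewrite card_imset // cardsT card_ord.
Qed.

Theorem theorem12 (k r h m : nat) :
  (0 < k)%N -> (0 < r)%N -> (0 < h)%N -> (r %| k + h)%N ->
  (k + h + (k + h) %/ r <= 2 ^ m - 1)%N ->
  (forall m' : nat, (k + h + (k + h) %/ r <= 2 ^ m' - 1)%N -> (m <= m')%N) ->
  forall F : finFieldType, #|F| = (2 ^ (h * m))%N ->
  exists (grp : 'I_(k + h) -> 'I_((k + h) %/ r)) (H : 'M[F]_(k, h)),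
    local_partition r grp /\ maximally_recoverable grp H.
Proof.
move=> k0 r0 h0 rkh nB _ F cF.
have m0 : (0 < m)%N.
  rewrite lt0n; apply/negP => /eqP m0; move: nB; rewrite m0 expn0 subnn; move=> H; have := leq_trans (leq_addr _ (k + h)) H; lia.
have [grp Hgrp] := grp_exists r0 rkh.
have hm0 : (0 < h * m)%N by rewrite muln_gt0 h0.
have two0 := two0_of hm0 cF.
have NB : (k + h <= 2 ^ m - 1)%N by apply: leq_trans nB; rewrite leq_addr.
have [lam Hlam] := lambda_exists h0 m0 cF NB.
have [H HH] := H_exists two0 Hlam.
exists grp, H; split => //.
move=> E HE x xn0; exact: (mr_main two0 HE HH Hlam xn0).
Qed.
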